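(* Let $d\ge2$, $n\ge1$, $\gamma$ a positive conductivity on the lattice graph below, and $d-1\le t\le dn-1$. Then the only vector in $\mathbb R^{E_t}$ orthogonal (for the standard inner product) to every $\mathbf J_p^{\mathbf u}$ with $\mathbf u\in\mathcal U^{(t)}$ and $p\in L_t\cup L_{t+1}\cup J_t$ is the zero vector; i.e. $\operatorname{span}\{\mathbf J_p^{\mathbf u}:\mathbf u\in\mathcal U^{(t)},\ p\in L_t\cup L_{t+1}\cup J_t\}^\perp=\{0\}$.
   Context: Lattice: $D=\{x\in\mathbb Z^d:1\le x_i\le n\ \forall i\}$, $\partial D=\{p\in\mathbb Z^d:\min_{q\in D}\|q-p\|_{\ell^1}=1\}$; $E$ = unordered pairs $pq\subseteq D\cup\partial D$ with $\|p-q\|_{\ell^1}=1$, not both in $\partial D$; $\mathcal N(p)=\{q:pq\in E\}$. Conductivity $\gamma:E\to(0,\infty)$, symmetric. $S_\gamma\varphi$ is the unique $\mathbf u\in\mathbb R^{D\cup\partial D}$ with $\sum_{q\in\mathcal N(p)}\gamma_{pq}(\mathbf u_q-\mathbf u_p)=0$ for all $p\in D$ and $\mathbf u=\varphi$ on $\partial D$. Functions on subsets are extended by zero. With $s(x)=\sum_ix_i$: $L_t=\{x\in D:s(x)=t\}$, $L_t^{\mathcal S}=\{x\in D:s(x)\le t\}$, $K_t^+=\{x\in\partial D:s(x)=t,\max_ix_i=n+1\}$, $K_t^-=\{x\in\partial D:s(x)=t,\min_ix_i=0\}$, $K_t^{\mathcal S\pm}=\bigcup_{\ell\le t}K_\ell^\pm$,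 $J_t=K_t^-\cup K_{t+1}^+$, $J_t^{\mathcal S}=K_t^{\mathcal S-}\cup K_{t+1}^{\mathcal S+}$. $T_1^{(t)}:\mathbb R^{J_t^{\mathcal S}}\to\mathbb R^{L_{t+1}}$, $\varphi\mapsto(S_\gamma\varphi)|_{L_{t+1}}$, and $\mathcal U^{(t)}=\{(S_\gamma\varphi)|_{J_t^{\mathcal S}\cup L_t^{\mathcal S}}:\varphi\in\ker T_1^{(t)}\}$; elements of $\mathcal U^{(t)}$ are extended by zero to $D\cup\partial D$. $E_t\subseteq E$ is the set of edges joining $K_t^-$ to $L_{t+1}$, $L_t$ to $K_{t+1}^+$, or $L_t$ to $L_{t+1}$. For a node $p$ and $\mathbf u\in\mathcal U^{(t)}$, $\mathbf J_p^{\mathbf u}\in\mathbb R^{E_t}$ is given by $\mathbf J_p^{\mathbf u}(e)=\mathbf u_p-\mathbf u_q$ if $e=pq\in E_t$ is incident to $p$, and $\mathbf J_p^{\mathbf u}(e)=0$ otherwise. *)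

(* Defs.v *)
From HB Require Import structures.
From mathcomp Require Import all_boot all_order all_algebra.
From Stdlib Require Import ClassicalEpsilon.
Set Implicit Arguments. Unset Strict Implicit. Unset Printing Implicit Defensive.
Import Order.TTheory GRing.Theory Num.Theory.
Local Open Scope ring_scope.

Section Lattice.
Variables (d n : nat) (R : realFieldType).

(* Nodes: points of [0, n+1]^d, which contains D ∪ ∂D. *)
Definition node := {ffun 'I_d -> 'I_(n.+2)}.

Definition l1dist (x y : node) : nat :=
  (\sum_(i < d) ((x i - y i) + (y i - x i)))%N.

Definition adj (x y : node) : bool := l1dist x y == 1%N.

Definition inD (x : node) : bool := [forall i, (1 <= x i <= n)%N].

Definition inBD (x : node) : bool :=
  ~~ inD x && [exists q, inD q && adj q x].

Definition edge (p q : node) : bool :=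
  [&& adj p q, inD p || inBD p, inD q || inBD q & inD p || inD q].

Definition ssum (x : node) : nat := (\sum_(i < d) (x i : nat))%N.
Definition maxc (x : node) : nat := (\max_(i < d) (x i : nat))%N.
Definition minc (x : node) : nat := (\big[minn/n.+1]_(i < d) (x i : nat))%N.

(* u solves the Dirichlet problem with conductivity gamma and boundary data phi;
   u is a vector on D ∪ ∂D (taken zero on the other points of the box). *)
Definition is_sol (gamma : node -> node -> R) (phi u : node -> R) : Prop :=
  (forall p, inD p -> \sum_(q | edge p q) gamma p q * (u q - u p) = 0) /\
  (forall p, inBD p -> u p = phi p) /\
  (forall p, ~~ inD p -> ~~ inBD p -> u p = 0).

Definition S_gamma (gamma : node -> node -> R) (phi : node -> R) : node -> R :=
  epsilon (inhabits (fun _ => 0)) (is_sol gamma phi).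

Definition Lt (t : nat) (x : node) : bool := inD x && (ssum x == t).
Definition LSt (t : nat) (x : node) : bool := inD x && (ssum x <= t)%N.
Definition Kp (t : nat) (x : node) : bool :=
  [&& inBD x, ssum x == t & maxc x == n.+1].
Definition Km (t : nat) (x : node) : bool :=
  [&& inBD x, ssum x == t & minc x == 0%N].
Definition KSp (t : nat) (x : node) : bool :=
  [&& inBD x, (ssum x <= t)%N & maxc x == n.+1].
Definition KSm (t : nat) (x : node) : bool :=
  [&& inBD x, (ssum x <= t)%N & minc x == 0%N].
Definition Jt (t : nat) (x : node) : bool := Km t x || Kp t.+1 x.
Definition JSt (t : nat) (x : node) : bool := KSm t x || KSp t.+1 x.

(* u ∈ U^(t) (extended by zero to D ∪ ∂D) *)
Definition inU (gamma : node -> node -> R) (t : nat) (u : node -> R) : Prop :=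
  exists phi : node -> R,
    (forall x, ~~ JSt t x -> phi x = 0) /\
    (forall x, Lt t.+1 x -> S_gamma gamma phi x = 0) /\ (* phi ∈ ker T_1^(t) *)
    (forall x, u x = if JSt t x || LSt t x then S_gamma gamma phi x else 0).

(* E_t, each edge written with its endpoint of level t first *)
Definition Et (t : nat) (a b : node) : bool :=
  edge a b &&
  [|| Km t a && Lt t.+1 b, Lt t a && Kp t.+1 b | Lt t a && Lt t.+1 b].

Definition Jvec (u : node -> R) (p a b : node) : R :=
  if a == p then u a - u b else if b == p then u b - u a else 0.

Definition dotEt (t : nat) (w v : node -> node -> R) : R :=
  \sum_(a : node) \sum_(b : node | Et t a b) w a b * v a b.

End Lattice.

(* Main.v *)
Require Import Defs.
From mathcomp Require Import all_boot all_order all_algebra.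
From mathcomp Require Import zify ring lra.
From Stdlib Require Import ClassicalEpsilon.
Import Order.TTheory GRing.Theory Num.Theory.
Set Implicit Arguments. Unset Strict Implicit. Unset Printing Implicit Defensive.

Section NodeLemmas.
Variables (d n : nat).
Local Notation node := (node d n).

Lemma ord_lt (x : 'I_n.+2) : (x : nat) <= n.+1.
Proof. by have := ltn_ord x. Qed.

Lemma adj_sym (x y : node) : adj x y = adj y x.
Proof. by rewrite /adj /l1dist; congr (_ == _); apply: eq_bigr => i _; rewrite addnC. Qed.

Lemma adjP (x y : node) : adj x y ->
  exists i, (((x i : nat) == (y i).+1) || ((y i : nat) == (x i).+1)) /\
            forall j, j != i -> x j = y j.
Proof.
rewrite /adj /l1dist => /eqP H.
set F := fun i : 'I_d => ((x i - y i) + (y i - x i))%N.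
have [i Hi] : exists i, F i != 0%N.
  apply/existsP; apply: contraT => /existsPn Hn.
  move: H; rewrite big1 // => i _; by apply/eqP/negPn/Hn.
exists i; move: H; rewrite (bigD1 i) //= => H.
have Hr : (\sum_(j < d | j != i) F j = 0)%N.
  move: H Hi; set S := (\sum_(j < d | j != i) F j)%N; rewrite /F /=; lia.
split; first by rewrite /F in Hi; lia.
move=> j Hj; apply: val_inj => /=.
move/eqP: Hr; rewrite sum_nat_eq0 => /forall_inP /(_ j Hj) /eqP.
rewrite /F; lia.
Qed.

Lemma ssum_diff (x y : node) i : (forall j, j != i -> x j = y j) ->
  (ssum x + y i = ssum y + x i)%N.
Proof.
move=> H; rewrite /ssum (bigD1 i) //= [in RHS](bigD1 i) //=.
rewrite (eq_bigr (fun j => (y j : nat))); last by move=> j /H ->.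
set S := (\sum_(i0 < d | i0 != i) (y i0 : nat))%N; lia.
Qed.

Lemma adj_ssum (x y : node) : adj x y ->
  (ssum x = (ssum y).+1)%N \/ (ssum y = (ssum x).+1)%N.
Proof. move=> /adjP [i [H1 H2]]; have := ssum_diff H2; lia. Qed.

Lemma adj_up (x y : node) : adj x y -> ssum y = (ssum x).+1 ->
  exists i, (y i : nat) = (x i).+1 /\ forall j, j != i -> x j = y j.
Proof.
move=> /adjP [i [H1 H2]] Hs; exists i; split => //.
have := ssum_diff H2; lia.
Qed.

Definition decr (i : 'I_d) (x : node) : node :=
  [ffun j => if j == i then inord (x j).-1 else x j].

Lemma decr_i i (x : node) : (decr i x i : nat) = (x i).-1.
Proof.
rewrite /decr ffunE eqxx inordK //; have := ltn_ord (x i); lia.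
Qed.

Lemma decr_j i j (x : node) : j != i -> decr i x j = x j.
Proof. by rewrite /decr ffunE => /negbTE ->. Qed.

Lemma decr_diff i (x : node) j : j != i -> x j = decr i x j.
Proof. by move=> H; rewrite decr_j. Qed.

Lemma ssum_decr i (x : node) : (0 < x i)%N -> ssum x = (ssum (decr i x)).+1.
Proof.
move=> H; have := ssum_diff (@decr_diff i x); rewrite decr_i; lia.
Qed.

Lemma adj_decr i (x : node) : (0 < x i)%N -> adj x (decr i x).
Proof.
move=> H; rewrite /adj /l1dist (bigD1 i) //= big1 ?decr_i.
  by apply/eqP; lia.
by move=> j Hj; rewrite decr_j //; lia.
Qed.

Lemma decr_inj i (x y : node) : (0 < x i)%N -> (0 < y i)%N -> decr i x = decr i y -> x = y.
Proof.
move=> Hx Hy H; apply/ffunP => j; case: (eqVneq j i) => [->|Hj].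
  apply: val_inj; move: (congr1 (fun f : node => (f i : nat)) H) => /=; rewrite !decr_i; lia.
by move: (congr1 (fun f : node => f j) H) => /=; rewrite !decr_j.
Qed.

Lemma inD_coord (x : node) i : inD x -> (1 <= x i <= n)%N.
Proof. by move=> /forallP. Qed.

Lemma inD_adj_cases (p x : node) : inD p -> adj p x -> inD x || inBD x.
Proof.
move=> Hp Ha; case: (boolP (inD x)) => //= Hx; rewrite /inBD Hx /=.
by apply/existsP; exists p; rewrite Hp.
Qed.

Lemma edge_sym (p q : node) : edge p q = edge q p.
Proof.
rewrite /edge adj_sym; case: (adj q p) => //=.
by case: (inD p); case: (inD q); case: (inBD p); case: (inBD q).
Qed.

Lemma edge_adj (p q : node) : edge p q -> adj p q.
Proof. by case/and4P. Qed.

Lemma edge_decr i (p : node) : inD p -> edge p (decr i p).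
Proof.
move=> Hp; have Hi : (0 < p i)%N by have := inD_coord i Hp; lia.
by rewrite /edge adj_decr // Hp /= (inD_adj_cases Hp (adj_decr Hi)).
Qed.

Lemma edge_irr (p : node) : edge p p = false.
Proof.
apply/negbTE; apply/negP => /edge_adj /adj_ssum; lia.
Qed.

Lemma BD_coord (x : node) : inBD x -> exists i, ((x i : nat) == 0%N) || ((x i : nat) == n.+1).
Proof.
case/andP => /forallPn [i Hi] _; exists i; have := ord_lt (x i); move: Hi; lia.
Qed.

Lemma BD_notD (x : node) : inBD x -> inD x = false.
Proof. by case/andP => /negbTE. Qed.

Lemma BD_nbr_unique (x a b : node) : inBD x -> inD a -> inD b -> adj a x -> adj b x -> a = b.
Proof.
move=> Hx Ha Hb Hax Hbx.
have [k Hk] := BD_coord Hx.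
have [i [Hi1 Hi2]] := adjP Hax.
have [i' [Hi1' Hi2']] := adjP Hbx.
have Hak := inD_coord k Ha; have Hbk := inD_coord k Hb.
have Eki : k = i.
  apply/eqP; apply/negPn/negP => /Hi2 E; move: Hak; rewrite E; move: Hk; lia.
have Eki' : k = i'.
  apply/eqP; apply/negPn/negP => /Hi2' E; move: Hbk; rewrite E; move: Hk; lia.
subst i i'.
apply/ffunP => j; case: (eqVneq j k) => [->|Hj].
  apply: val_inj => /=; move: Hk Hak Hbk Hi1 Hi1'; lia.
by rewrite Hi2 // Hi2'.
Qed.

Lemma minc0 (x : node) i : (x i : nat) = 0%N -> minc x = 0%N.
Proof.
move=> H; rewrite /minc; have : i \in index_enum 'I_d by rewrite mem_index_enum.
elim: (index_enum _) => [//|j r IH]; rewrite inE big_cons /= => /orP [/eqP <-|/IH ->].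
  by rewrite H min0n.
by rewrite minn0.
Qed.

Lemma maxcN (x : node) i : (x i : nat) = n.+1 -> maxc x = n.+1.
Proof.
move=> H; rewrite /maxc (bigD1 i) //= H; apply/maxn_idPl.
by apply/bigmax_leqP => j _; apply: ord_lt.
Qed.

Lemma maxcP (x : node) : maxc x = n.+1 -> exists i, (x i : nat) = n.+1.
Proof.
move=> H; case: (boolP [exists i, (x i : nat) == n.+1]) => [/existsP [i /eqP]|/existsPn Hn].
  by exists i.
have : (maxc x <= n)%N.
  apply/bigmax_leqP => j _; have := Hn j; have := ord_lt (x j); lia.
by rewrite H ltnn.
Qed.

Lemma BD_JSt (t : nat) (x : node) : inBD x -> (ssum x <= t)%N -> JSt t x.
Proof.
move=> Hx Hs; have [i /orP [/eqP Hi|/eqP Hi]] := BD_coord Hx.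
  by rewrite /JSt /KSm Hx Hs (minc0 Hi).
by rewrite /JSt /KSp Hx (maxcN Hi) eqxx andbT (_ : (ssum x <= t.+1)%N) ?orbT //; lia.
Qed.

Lemma BD_below_minc (q x : node) : inD q -> adj q x -> ssum q = (ssum x).+1 -> inBD x -> minc x = 0%N.
Proof.
move=> Hq Ha Hs Hx; rewrite adj_sym in Ha; have [i [H1 H2]] := adj_up Ha Hs.
have [k Hk] := BD_coord Hx.
case: (eqVneq k i) => [E|Ne].
  subst k; apply: (minc0 (i := i)); have := inD_coord i Hq; move: Hk H1; lia.
have := inD_coord k Hq; rewrite -(H2 _ Ne); move: Hk; lia.
Qed.

Lemma maxc_above (p q : node) : inD p -> adj p q -> maxc q = n.+1 -> ssum q = (ssum p).+1.
Proof.
move=> Hp Ha /maxcP [i Hi]; have [k [H1 H2]] := adjP Ha.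
case: (eqVneq i k) => [E|Ne].
  subst k; have := ssum_diff H2; have := inD_coord i Hp; move: Hi H1; lia.
have := inD_coord i Hp; rewrite H2 // Hi; lia.
Qed.

End NodeLemmas.

Lemma decr_up d n (y z : Defs.node d n) i : (0 < y i)%N -> adj (decr i y) z -> ssum z = ssum y ->
  z = y \/ ((z i : nat) = (y i).-1 /\ forall j, j != i -> (y j <= z j)%N).
Proof.
move=> Hy Ha Hs; have Hs' := ssum_decr Hy.
have [k [Hk1 Hk2]] := adj_up Ha (etrans Hs Hs').
case: (eqVneq k i) => [Eki|Nki].
  subst k; left; apply/ffunP => j; case: (eqVneq j i) => [->|Nj].
    by apply: val_inj => /=; rewrite Hk1 decr_i; move: Hy; clear; case: (nat_of_ord _).
  by rewrite -Hk2 // decr_j.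
right; split.
  by rewrite -Hk2 1?eq_sym // decr_i.
move=> j Nj; case: (eqVneq j k) => [->|Njk].
  by rewrite Hk1 decr_j // eq_sym.
by rewrite -Hk2 // decr_j.
Qed.

Local Open Scope ring_scope.

Section Tri.
Variables (R : fieldType) (X Y : finType) (P : pred Y) (A : Y -> X -> R) (b : Y -> R)
  (pi : Y -> X) (rho : Y -> nat) (base : X -> R).
Hypotheses (pi_inj : {in P &, injective pi}) (Apiv : forall y, P y -> A y (pi y) != 0)
  (Arank : forall y y', P y -> P y' -> y != y' -> A y' (pi y) != 0 -> (rho y < rho y')%N).

Lemma tri_step k : exists g : X -> R,
  (forall y, P y -> (rho y < k)%N -> \sum_x A y x * g x = b y) /\
  (forall x, (forall y, P y -> pi y != x) -> g x = base x).
Proof.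
elim: k => [|k [g [Hg1 Hg2]]]; first by exists base.
pose g' x := if [pick y | P y && (rho y == k) && (pi y == x)] is Some y
  then (b y - \sum_(x' | x' != x) A y x' * g x') / A y x else g x.
have Hsame : forall y x, P y -> (rho y <= k)%N -> x != pi y -> A y x * g' x = A y x * g x.
  move=> y x Py Hk Hx; rewrite /g'; case: pickP => // y'' /andP [/andP [Py'' /eqP Hr] /eqP Hpi].
  case: (eqVneq (A y x) 0) => [->|Hne]; first by rewrite !mul0r.
  have Hyy : y'' != y by apply/eqP => E; move: Hx; rewrite -Hpi E eqxx.
  rewrite -Hpi in Hne; have := Arank Py'' Py Hyy Hne; lia.
exists g'; split; last first.
  move=> x Hx; rewrite /g'; case: pickP => [y /andP [/andP [Py _] Hpi]|_]; last exact: Hg2.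
  by move: (Hx y Py); rewrite Hpi.
move=> y Py; rewrite ltnS leq_eqVlt => /orP [/eqP Hr|Hlt].
- rewrite (bigD1 (pi y)) //=.
  rewrite (eq_bigr (fun x => A y x * g x)); last by move=> x Hx; apply: Hsame => //; lia.
  rewrite {1}/g'; case: pickP => [y'' /andP [/andP [Py'' _] /eqP Hpi]|/(_ y)].
    have E : y'' = y by apply: pi_inj.
    subst y''; rewrite mulrC divfK ?Apiv //; by rewrite subrK.
  by rewrite Py Hr !eqxx.
- rewrite -(Hg1 y Py Hlt); apply: eq_bigr => x _.
  case: (eqVneq x (pi y)) => [->|Hx]; last by apply: Hsame => //; lia.
  rewrite /g'; case: pickP => // y'' /andP [/andP [Py'' /eqP Hr] /eqP Hpi].
  have E : y'' = y by apply: pi_inj.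
  by subst y''; move: Hlt; rewrite Hr ltnn.
Qed.

Lemma tri_solve : exists g : X -> R,
  (forall y, P y -> \sum_x A y x * g x = b y) /\
  (forall x, (forall y, P y -> pi y != x) -> g x = base x).
Proof.
have [g [H1 H2]] := tri_step (\max_y rho y).+1.
exists g; split => // y Py; apply: H1 => //; rewrite ltnS; exact: leq_bigmax.
Qed.
End Tri.

Local Open Scope ring_scope.

Section Uniq.
Variables (R : realFieldType) (d n : nat).
Local Notation node := (node d n).
Variables (gamma : node -> node -> R).
Hypotheses (hd : (2 <= d)%N) (hn : (1 <= n)%N)
  (gamma_pos : forall p q, edge p q -> 0 < gamma p q).

Let i0 : 'I_d := Ordinal (ltn_trans (ltnSn 0) hd).

Lemma maxp (z : node -> R) :
  (forall p, inD p -> \sum_(q | edge p q) gamma p q * (z q - z p) = 0) ->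
  (forall p, ~~ inD p -> z p = 0) -> forall p, z p <= 0.
Proof.
move=> Hh Hb x0; rewrite leNgt; apply/negP => Hx0.
pose P := [pred x : node | 0 < z x].
case: (@arg_maxP _ R _ x0 P z Hx0) => xm Pxm Hmax.
pose Q := [pred x : node | (0 < z x) && (z x == z xm)].
have Qxm : Q xm by rewrite /Q /= eqxx andbT; exact: Pxm.
case: (@arg_minnP _ xm Q (fun x => (x i0 : nat)) Qxm) => y /andP [Py /eqP Ey] Hmin.
have Dy : inD y by apply: contraTT Py => /Hb ->; rewrite ltxx.
have Hi : (0 < y i0)%N by case/andP: (inD_coord i0 Dy).
have Hsum : \sum_(q | edge y q) gamma y q * (z y - z q) = 0.
  apply/eqP; rewrite -oppr_eq0 -sumrN -[X in _ == X](Hh y Dy); apply/eqP; apply: eq_bigr => q _; ring.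
have := psumr_eq0P _ Hsum (edge_decr i0 Dy).
have Hle : forall q, edge y q -> 0 <= gamma y q * (z y - z q).
  move=> q Hq; apply: mulr_ge0; first exact: ltW (gamma_pos Hq).
  rewrite subr_ge0; case: (ltrP 0 (z q)) => Hq0.
    by rewrite Ey; apply: Hmax.
  by apply: le_trans Hq0 (ltW Py).
move=> /(_ Hle) /eqP; rewrite mulf_eq0 (gt_eqF (gamma_pos (edge_decr i0 Dy))) /= subr_eq0.
move=> /eqP E.
have : Q (decr i0 y) by rewrite /Q /= -E Py Ey eqxx.
move=> /Hmin; rewrite decr_i; move: Hi; clear; case: (nat_of_ord _) => // m _ /=; by rewrite ltnn.
Qed.

Lemma sol_unique (phi u v : node -> R) : is_sol gamma phi u -> is_sol gamma phi v ->
  forall x, u x = v x.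
Proof.
move=> [Hu1 [Hu2 Hu3]] [Hv1 [Hv2 Hv3]].
have key : forall a b : node -> R, (forall p, inD p -> \sum_(q | edge p q) gamma p q * (a q - a p) = 0) ->
   (forall p, inD p -> \sum_(q | edge p q) gamma p q * (b q - b p) = 0) ->
   (forall p, ~~ inD p -> a p = b p) -> forall x, a x - b x <= 0.
  move=> a b Ha Hb Hab x; apply: (@maxp (fun x => a x - b x)) => [p Dp|p Hp].
    have E : \sum_(q | edge p q) gamma p q * ((a q - b q) - (a p - b p)) =
      \sum_(q | edge p q) gamma p q * (a q - a p) - \sum_(q | edge p q) gamma p q * (b q - b p).
      by rewrite -sumrB; apply: eq_bigr => q _; ring.
    by apply: (etrans E); rewrite Ha // Hb // subrr.
  by rewrite /= Hab // subrr.
have Hab : forall p, ~~ inD p -> u p = v p.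
  move=> p Dp; case: (boolP (inBD p)) => Bp; first by rewrite Hu2 // Hv2.
  by rewrite Hu3 // Hv3.
move=> x; apply/eqP; rewrite eq_le; apply/andP; split; rewrite -subr_le0.
  exact: key.
by apply: key => // p /Hab ->.
Qed.

Lemma S_gamma_eq (phi u : node -> R) : is_sol gamma phi u -> forall x, S_gamma gamma phi x = u x.
Proof.
move=> Hu; apply: (sol_unique _ Hu); rewrite /S_gamma; apply: epsilon_spec; by exists u.
Qed.
End Uniq.

Local Open Scope ring_scope.

Lemma f_lt (n s s' a a' : nat) : (s' < s)%N -> (a' <= n.+1)%N -> (s' * n.+2 + a' < s * n.+2 + a)%N.
Proof. move=> H1 H2; nia. Qed.

Section Stage2.
Variables (R : realFieldType) (d n : nat).
Local Notation node := (node d n).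
Variables (gamma : node -> node -> R).
Hypotheses (hd : (2 <= d)%N) (hn : (1 <= n)%N)
  (gamma_pos : forall p q, edge p q -> 0 < gamma p q).
Variable t : nat.

Let i0 : 'I_d := Ordinal (ltn_trans (ltnSn 0) hd).

Definition Gok (g : node -> R) :=
  (forall x, ~~ Lt t x -> ~~ Km t x -> ~~ Kp t.+1 x -> g x = 0) /\
  (forall y, Lt t.+1 y -> \sum_(x | edge y x) gamma y x * g x = 0).

Lemma Km_JSt (x : node) : Km t x -> JSt t x.
Proof. by case/and3P => H1 /eqP H2 H3; rewrite /JSt /KSm H1 H2 leqnn H3. Qed.

Lemma Kp_JSt (x : node) : Kp t.+1 x -> JSt t x.
Proof. by case/and3P => H1 /eqP H2 H3; rewrite /JSt /KSp H1 H2 leqnn H3 orbT. Qed.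

Lemma Lt_ssum s (x : node) : Lt s x -> ssum x = s.
Proof. by case/andP => _ /eqP. Qed.
Lemma Lt_D s (x : node) : Lt s x -> inD x.
Proof. by case/andP. Qed.
Lemma Km_ssum s (x : node) : Km s x -> ssum x = s.
Proof. by case/and3P => _ /eqP. Qed.
Lemma Kp_ssum s (x : node) : Kp s x -> ssum x = s.
Proof. by case/and3P => _ /eqP. Qed.
Lemma Km_BD s (x : node) : Km s x -> inBD x.
Proof. by case/and3P. Qed.
Lemma Kp_BD s (x : node) : Kp s x -> inBD x.
Proof. by case/and3P. Qed.

Lemma stage2 (g : node -> R) : Gok g -> exists u, inU gamma t u /\
  forall x, [|| Lt t x, Km t x, Kp t.+1 x | Lt t.+1 x] -> u x = g x.
Proof.
move=> [Gs Gc].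
pose P := [pred p : node | inD p && (ssum p <= t)%N].
pose A (p x : node) := (if edge p x then gamma p x else 0) -
   (if x == p then \sum_(q | edge p q) gamma p q else 0).
pose f (x : node) := (ssum x * n.+2 + x i0)%N.
pose N := (\max_x f x)%N.
pose rho p := (N - f p)%N.
have fN : forall x, (f x <= N)%N by move=> x; apply: (@leq_bigmax _ (fun x => f x)).
have Ppos : forall p, P p -> (0 < p i0)%N by move=> p /andP [Dp _]; case/andP: (inD_coord i0 Dp).
have pi_inj : {in P &, injective (decr i0)}.
  by move=> p p' Hp Hp'; apply: decr_inj; apply: Ppos.
have Hneq : forall p, P p -> decr i0 p != p.
  move=> p Hp; apply/eqP => E; have := ssum_decr (Ppos _ Hp); rewrite E; lia.
have Apiv : forall p, P p -> A p (decr i0 p) != 0.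
  move=> p Hp; rewrite /A (negbTE (Hneq _ Hp)) subr0 edge_decr; last by case/andP: Hp.
  by rewrite gt_eqF // gamma_pos // edge_decr //; case/andP: Hp.
have Arank : forall p p', P p -> P p' -> p != p' -> A p' (decr i0 p) != 0 -> (rho p < rho p')%N.
  move=> p p' Hp Hp' Hpp' HA.
  suff : (f p' < f p)%N by move: (fN p) (fN p'); rewrite /rho; lia.
  have Hs := ssum_decr (Ppos _ Hp).
  have Hlt := ord_lt (decr i0 p i0).
  case: (eqVneq (decr i0 p) p') => [E|Ne].
    rewrite /f -E Hs; apply: f_lt => //.
  move: HA; rewrite /A (negbTE Ne) subr0; case: ifP => [He _|]; last by rewrite eqxx.
  have Ha := edge_adj He.
  case: (adj_ssum Ha) => Hs'.
    rewrite adj_sym in Ha; have [k [Hk1 Hk2]] := adj_up Ha Hs'.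
    have Hp0 := Ppos _ Hp.
    case: (eqVneq k i0) => [Ek|Nk].
      subst k; case/negP: Hpp'; apply/eqP/ffunP => j.
      case: (eqVneq j i0) => [->|Nj].
        apply: val_inj => /=; rewrite Hk1 decr_i; move: Hp0; clear.
        by case: (nat_of_ord _).
      by rewrite -Hk2 // decr_j.
    have E0 : p' i0 = decr i0 p i0 by rewrite Hk2 // eq_sym.
    rewrite /f Hs' -Hs ltn_add2l E0 decr_i.
    by move: Hp0; clear; case: (nat_of_ord _).
  rewrite /f; apply: f_lt; first by rewrite Hs Hs'.
  exact: ord_lt.
have [u [Hu1 Hu2]] := tri_solve (fun _ => 0) g pi_inj Apiv Arank.
have Hharm : forall p, P p -> \sum_(q | edge p q) gamma p q * (u q - u p) = 0.
  move=> p Hp.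
  have L : \sum_(q | edge p q) gamma p q * (u q - u p) =
     \sum_(q | edge p q) gamma p q * u q - (\sum_(q | edge p q) gamma p q) * u p.
    by rewrite mulr_suml -sumrB; apply: eq_bigr => q _; rewrite mulrBr.
  have E1 : \sum_x (if edge p x then gamma p x else 0) * u x = \sum_(x | edge p x) gamma p x * u x.
    by rewrite [RHS]big_mkcond; apply: eq_bigr => x _; case: ifP => _; rewrite ?mul0r.
  have E2 : \sum_x (if x == p then \sum_(q | edge p q) gamma p q else 0) * u x =
      (\sum_(q | edge p q) gamma p q) * u p.
    rewrite (bigD1 p) //= eqxx [X in _ + X]big1 ?addr0 // => x /negbTE ->; by rewrite mul0r.
  have Rr : \sum_x A p x * u x =
     \sum_(q | edge p q) gamma p q * u q - (\sum_(q | edge p q) gamma p q) * u p.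
    rewrite -E1 -E2 -sumrB; apply: eq_bigr => x _; by rewrite /A mulrBl.
  by rewrite L -Rr Hu1.
have Hnp : forall x, (t <= ssum x)%N -> u x = g x.
  move=> x Hx; apply: Hu2 => p Hp; apply/eqP => E; have := ssum_decr (Ppos _ Hp).
  rewrite E; case/andP: Hp => _; lia.
have Hout : forall x, ~~ inD x -> ~~ inBD x -> u x = 0.
  move=> x Dx Bx.
  case: (boolP [exists p, P p && (decr i0 p == x)]) => [/existsP [p /andP [Hp /eqP E]]|/existsPn Hn].
    case/andP: (Hp) => Dp _; have := inD_adj_cases Dp (adj_decr (Ppos _ Hp)).
    by rewrite E (negbTE Dx) (negbTE Bx).
  rewrite Hu2; last by move=> p Hp; have := Hn p; rewrite Hp.
  apply: Gs; apply/negP.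
  - by move/Lt_D; apply/negP.
  - by move/Km_BD; apply/negP.
  - by move/Kp_BD; apply/negP.
pose phi := fun x => if JSt t x then u x else 0.
have Hsol : is_sol gamma phi u.
  split; [|split].
  - move=> p Dp; case: (leqP (ssum p) t) => Hst.
      by apply: Hharm; apply/andP; split.
    have up : u p = 0.
      rewrite Hnp ?(ltnW Hst) //; apply: Gs; apply/negP.
      - by move/Lt_ssum => E; move: Hst; rewrite E ltnn.
      - by move/Km_BD; rewrite /inBD Dp.
      - by move/Kp_BD; rewrite /inBD Dp.
    have Hq : forall q, edge p q -> (t <= ssum q)%N.
      by move=> q /edge_adj /adj_ssum; lia.
    case: (eqVneq (ssum p) t.+1) => Hs1.
      rewrite -[RHS](Gc p (introT andP (conj Dp (introT eqP Hs1)))).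
      by apply: eq_bigr => q Hq'; rewrite up subr0 Hnp // Hq.
    apply: big1 => q Hq'; rewrite up subr0 Hnp ?Hq // Gs ?mulr0 //; apply/negP.
    - move/Lt_ssum => E; have := edge_adj Hq'; move/adj_ssum; lia.
    - move/Km_ssum => E; have := edge_adj Hq'; move/adj_ssum; lia.
    - case/and3P => Bq /eqP Es /eqP Mq; have := maxc_above Dp (edge_adj Hq') Mq; lia.
  - move=> p Bp; rewrite /phi; case: ifP => // HJ.
    have Hst : (t < ssum p)%N.
      by rewrite ltnNge; apply/negP => Hle; move: HJ; rewrite BD_JSt.
    rewrite Hnp ?(ltnW Hst) //; apply: Gs; apply/negP.
    - by move/Lt_D; rewrite BD_notD.
    - by move/Km_JSt; rewrite HJ.
    - by move/Kp_JSt; rewrite HJ.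
  - exact: Hout.
have HS := S_gamma_eq hd gamma_pos Hsol.
have JnD : forall x : node, inD x -> JSt t x = false.
  move=> x Dx; rewrite /JSt /KSm /KSp /inBD Dx /=; by [].
exists (fun x => if JSt t x || LSt t x then S_gamma gamma phi x else 0); split.
  exists phi; split; [|split] => //.
    by move=> x /negbTE; rewrite /phi => ->.
  move=> x Hx; rewrite HS Hnp; last by rewrite (Lt_ssum Hx).
  apply: Gs; apply/negP.
  - by move/Lt_ssum; rewrite (Lt_ssum Hx); lia.
  - by move/Km_BD; rewrite /inBD (Lt_D Hx).
  - by move/Kp_BD; rewrite /inBD (Lt_D Hx).
move=> x /or4P [H|H|H|H].
- have -> : LSt t x by rewrite /LSt (Lt_D H) (Lt_ssum H) leqnn.
  by rewrite orbT HS Hnp // (Lt_ssum H).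
- by rewrite (Km_JSt H) /= HS Hnp // (Km_ssum H).
- by rewrite (Kp_JSt H) /= HS Hnp // (Kp_ssum H).
- have -> : LSt t x = false by rewrite /LSt (Lt_D H) (Lt_ssum H) ltnn.
  rewrite JnD ?(Lt_D H) //= Gs //; apply/negP.
  + by move/Lt_ssum; rewrite (Lt_ssum H); lia.
  + by move/Km_BD; rewrite /inBD (Lt_D H).
  + by move/Kp_BD; rewrite /inBD (Lt_D H).
Qed.
End Stage2.

Local Open Scope ring_scope.

Section Stage1.
Variables (R : realFieldType) (d n : nat).
Local Notation node := (node d n).
Variables (gamma : node -> node -> R).
Hypotheses (hd : (2 <= d)%N) (hn : (1 <= n)%N)
  (gamma_pos : forall p q, edge p q -> 0 < gamma p q).
Variable t : nat.

Let i0 : 'I_d := Ordinal (ltn_trans (ltnSn 0) hd).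
Let i1 : 'I_d := Ordinal hd.
Lemma i01 : i0 != i1. Proof. by []. Qed.

Lemma Et_q (x q : node) : Lt t.+1 q -> Et t x q -> edge x q /\ (Km t x || Lt t x).
Proof.
move=> Hq /andP [He /or3P [/andP [H _]|/andP [_ H]|/andP [H _]]]; rewrite ?H ?orbT //.
by move: (Kp_BD H); rewrite /inBD (Lt_D Hq).
Qed.

Lemma star_Et (x q : node) : Lt t.+1 q -> edge q x -> ssum x = t -> Et t x q.
Proof.
move=> Hq He Hs; rewrite /Et edge_sym He /=.
case: (boolP (inD x)) => Dx.
  by apply/or3P; apply: Or33; apply/andP; split => //; rewrite /Lt Dx Hs eqxx.
have Bx : inBD x by move: (inD_adj_cases (Lt_D Hq) (edge_adj He)); rewrite (negbTE Dx).
have Mx := BD_below_minc (Lt_D Hq) (edge_adj He) (etrans (Lt_ssum Hq) (congr1 S (esym Hs))) Bx.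
by apply/or3P; apply: Or31; apply/andP; split => //; rewrite /Km Bx Hs Mx !eqxx.
Qed.

Lemma stage1 (q a a' : node) : Lt t.+1 q -> Et t a q -> Et t a' q -> a != a' ->
  exists g, Gok gamma t g /\ forall x, Et t x q ->
    g x = (if x == a then gamma q a' else if x == a' then - gamma q a else 0).
Proof.
move=> Hq Ha Ha' Naa.
pose v (x : node) := if x == a then gamma q a' else if x == a' then - gamma q a else 0.
pose P := [pred y : node | Lt t.+1 y && (y != q)].
pose A (y x : node) := if edge y x then gamma y x else 0.
pose m (y : node) := if (y i0 <= q i0)%N then i0 else i1.
pose pi (y : node) := decr (m y) y.
pose rho (y : node) := if (y i0 <= q i0)%N then (n.+1 - y i0)%N else (n.+1 - y i1)%N.
have Ppos : forall y j, P y -> (0 < y j)%N.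
  by move=> y j /andP [/Lt_D Dy _]; case/andP: (inD_coord j Dy).
have Pn : forall y j, P y -> (y j <= n)%N.
  by move=> y j /andP [/Lt_D Dy _]; case/andP: (inD_coord j Dy).
have Pss : forall y, P y -> ssum y = t.+1 by move=> y /andP [/Lt_ssum].
have key : forall y z, P y -> adj (pi y) z -> ssum z = t.+1 -> z = y \/
    (if (y i0 <= q i0)%N then (z i0 < y i0)%N else ((z i1 < y i1)%N && (y i0 <= z i0)%N)).
  move=> y z Py Ha1 Hz; rewrite /pi /m in Ha1 *.
  have := decr_up (Ppos y (if (y i0 <= q i0)%N then i0 else i1) Py) Ha1 (etrans Hz (esym (Pss _ Py))).
  case=> [->|[H1 H2]]; [by left|right].
  case: ifP => Hc; rewrite Hc in H1 H2.
    by rewrite H1; have := Ppos y i0 Py; clear; case: (nat_of_ord _).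
  apply/andP; split; last by apply: H2.
  by rewrite H1; have := Ppos y i1 Py; clear; case: (nat_of_ord _).
have Dpi : forall y, P y -> edge y (pi y) by move=> y /andP [/Lt_D Dy _]; apply: edge_decr.
have pi_inj : {in P &, injective pi}.
  move=> y y' Py Py'; rewrite /pi /m.
  case: ifP => H1; case: ifP => H2 E.
  - exact: decr_inj (Ppos _ _ Py) (Ppos _ _ Py') E.
  - have := congr1 (fun f : node => (f i0 : nat)) E; rewrite /= decr_i decr_j //.
    move: H1 H2 (Ppos y i0 Py); lia.
  - have := congr1 (fun f : node => (f i0 : nat)) E; rewrite /= decr_i decr_j //.
    move: H1 H2 (Ppos y' i0 Py'); lia.
  - exact: decr_inj (Ppos _ _ Py) (Ppos _ _ Py') E.
have Apiv : forall y, P y -> A y (pi y) != 0.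
  by move=> y Py; rewrite /A Dpi // gt_eqF // gamma_pos // Dpi.
have Arank : forall y y', P y -> P y' -> y != y' -> A y' (pi y) != 0 -> (rho y < rho y')%N.
  move=> y y' Py Py' Nyy; rewrite /A; case: ifP => [He _|]; last by rewrite eqxx.
  rewrite edge_sym in He.
  case: (key y y' Py (edge_adj He) (Pss _ Py')) => [E|]; first by rewrite E eqxx in Nyy.
  rewrite /rho; case: ifP => Hc.
    move=> H; rewrite (_ : (y' i0 <= q i0)%N); last by move: H Hc; lia.
    by move: H (Pn y i0 Py); lia.
  move=> /andP [H1 H2]; rewrite (_ : (y' i0 <= q i0)%N = false); last by move: H2 Hc; lia.
  by move: H1 (Pn y i1 Py); lia.
have noadj : forall y, P y -> ~~ adj q (pi y).
  move=> y Py; apply/negP => Hadj; rewrite adj_sym in Hadj.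
  case: (key y q Py Hadj (Lt_ssum Hq)) => [E|]; first by case/andP: Py => _; rewrite E eqxx.
  case: ifP => Hc; first by lia.
  by case/andP => _; lia.
have [g [Hg1 Hg2]] := tri_solve (fun _ => 0) v pi_inj Apiv Arank.
have Hstar : forall x, edge q x -> g x = v x.
  move=> x He; apply: Hg2 => y Py; apply/eqP => E; have := noadj y Py.
  by rewrite E (edge_adj He).
have [Hea Hma] := Et_q Hq Ha; have [Hea' Hma'] := Et_q Hq Ha'.
exists g; split; last first.
  by move=> x /(Et_q Hq) [He _]; apply: Hstar; rewrite edge_sym.
split.
  move=> x H1 H2 H3.
  case: (boolP [exists y, P y && (pi y == x)]) => [/existsP [y /andP [Py /eqP E]]|/existsPn Hn].
    exfalso; have Ey : ssum x = t.
      move: (ssum_decr (Ppos y (m y) Py)); rewrite (Pss _ Py) (_ : decr (m y) y = x) //.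
      by move/eqP; rewrite eqSS => /eqP.
    have Dy : inD y by case/andP: Py => /Lt_D.
    case: (boolP (inD x)) => Dx.
      by move/negP: H1; apply; rewrite /Lt Dx Ey eqxx.
    have Bx : inBD x.
      by move: (inD_adj_cases Dy (edge_adj (Dpi y Py))); rewrite E (negbTE Dx).
    have Mx : minc x = 0%N.
      apply: (BD_below_minc Dy) => //; first by rewrite -E; exact: edge_adj (Dpi y Py).
      by rewrite Ey Pss.
    by move/negP: H2; apply; rewrite /Km Bx Ey Mx !eqxx.
  rewrite Hg2; last by move=> y Py; have := Hn y; rewrite Py.
  rewrite /v; case: (eqVneq x a) => [E|_]; first by subst x; move: Hma H1 H2; case/orP => ->.
  case: (eqVneq x a') => [E|//]; by subst x; move: Hma' H1 H2; case/orP => ->.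
move=> y Hy; case: (eqVneq y q) => [->|Nyq].
  rewrite (eq_bigr (fun x => gamma q x * v x)); last by move=> x He; rewrite Hstar.
  rewrite edge_sym in Hea; rewrite edge_sym in Hea'.
  rewrite (bigD1 a) //= (bigD1 a') /=; last by rewrite Hea' eq_sym Naa.
  rewrite big1; last first.
    by move=> x /andP [/andP [_ N1] N2]; rewrite /v (negbTE N1) (negbTE N2) mulr0.
  rewrite /v eqxx (negbTE (introN eqP (fun E => (negP Naa) (introT eqP (esym E))))) eqxx.
  by rewrite addr0 mulrN mulrC subrr.
rewrite -[RHS](Hg1 y (introT andP (conj Hy Nyq))) /A.
rewrite [LHS]big_mkcond; apply: eq_bigr => x _; by case: ifP; rewrite ?mul0r.
Qed.
End Stage1.

Local Open Scope ring_scope.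

Section MainProof.
Variables (R : realFieldType) (d n : nat).
Local Notation node := (node d n).
Variables (gamma : node -> node -> R).
Hypotheses (hd : (2 <= d)%N) (hn : (1 <= n)%N)
  (gamma_pos : forall p q, edge p q -> 0 < gamma p q).
Variable t : nat.
Variable w : node -> node -> R.
Hypothesis Hyp : forall u, inU gamma t u ->
     forall p, Lt t p || Lt t.+1 p || Jt t p ->
       dotEt t w (fun a b => Jvec u p a b) = 0.

Let i0 : 'I_d := Ordinal (ltn_trans (ltnSn 0) hd).
Let i1 : 'I_d := Ordinal hd.

Lemma Et_ends (a b : node) : Et t a b -> (Km t a || Lt t a) && (Lt t.+1 b || Kp t.+1 b).
Proof. by case/andP => _ /or3P [/andP [-> ->]|/andP [-> ->]|/andP [-> ->]]; rewrite ?orbT. Qed.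

Lemma Et_ssum (a b : node) : Et t a b -> ssum a = t /\ ssum b = t.+1.
Proof.
move/Et_ends => /andP [/orP [H|H] /orP [H'|H']];
  by rewrite ?(Km_ssum H) ?(Lt_ssum H) ?(Lt_ssum H') ?(Kp_ssum H').
Qed.

Lemma Et_Kp (a b : node) : Et t a b -> Kp t.+1 b -> Lt t a.
Proof.
move=> /andP [_ /or3P [/andP [_ H]|/andP [-> _]|/andP [-> _]]] // Hb.
by move: (Kp_BD Hb); rewrite /inBD (Lt_D H).
Qed.

Lemma test (g : node -> R) : Gok gamma t g -> forall p, Lt t p || Lt t.+1 p || Jt t p ->
  dotEt t w (fun a b => Jvec g p a b) = 0.
Proof.
move=> Hg p Hp; have [u [Hu Hug]] := stage2 hd hn gamma_pos Hg.
rewrite -(Hyp Hu Hp); apply: eq_bigr => a _; apply: eq_bigr => b Hab.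
have /andP [Ha Hb] := Et_ends Hab; rewrite /Jvec.
have -> : u a = g a by apply: Hug; case/orP: Ha => ->; rewrite ?orbT.
have -> : u b = g b by apply: Hug; case/orP: Hb => ->; rewrite ?orbT.
by [].
Qed.

Lemma dot_col (F : node -> node -> R) q :
  (forall a b, Et t a b -> b != q -> F a b = 0) ->
  dotEt t w F = \sum_(a | Et t a q) w a q * F a q.
Proof.
move=> HF; rewrite /dotEt [RHS]big_mkcond; apply: eq_bigr => a _.
case: ifP => Haq.
  rewrite (bigD1 q) //= big1 ?addr0 // => b /andP [Hab Nb]; by rewrite HF ?mulr0.
by apply: big1 => b Hab; rewrite HF ?mulr0 //; apply/eqP => E; rewrite -E Hab in Haq.
Qed.

Lemma dot_row (F : node -> node -> R) p :
  (forall a b, Et t a b -> a != p -> F a b = 0) ->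
  dotEt t w F = \sum_(b | Et t p b) w p b * F p b.
Proof.
move=> HF; rewrite /dotEt (bigD1 p) //= [X in _ + X]big1 ?addr0 //.
by move=> a Na; apply: big1 => b Hab; rewrite HF ?mulr0.
Qed.

Lemma stepA (a b : node) : Et t a b -> Kp t.+1 b -> w a b = 0.
Proof.
move=> Hab Hb.
pose g (x : node) : R := if x == b then 1 else 0.
have Gg : Gok gamma t g.
  split.
    by move=> x _ _ H3; rewrite /g; case: eqP => // E; rewrite E Hb in H3.
  move=> y Hy; apply: big1 => x Hx; rewrite /g; case: eqP => [E|_]; last by rewrite mulr0.
  subst x; have := adj_ssum (edge_adj Hx); rewrite (Lt_ssum Hy) (Kp_ssum Hb); lia.
have := test Gg (p := b); rewrite /Jt Hb !orbT => /(_ isT).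
have [Ha _] := Et_ssum Hab.
rewrite (dot_col (q := b)); last first.
  move=> a' b' Hab' Nb; rewrite /Jvec (negbTE Nb); case: eqP => // E.
  by have [E1 _] := Et_ssum Hab'; move: E1; rewrite E (Kp_ssum Hb); lia.
have Da : inD a by apply: Lt_D (Et_Kp Hab Hb).
rewrite (bigD1 a) //= big1 ?addr0; last first.
  move=> a' /andP [Ha' Na']; exfalso; move/negP: Na'; apply; apply/eqP.
  have Da' : inD a' by apply: Lt_D (Et_Kp Ha' Hb).
  apply: (BD_nbr_unique (Kp_BD Hb)) => //.
    exact: edge_adj (proj1 (andP Ha')).
  exact: edge_adj (proj1 (andP Hab)).
rewrite /Jvec eqxx; case: eqP => [E|_].
  by move: Ha; rewrite E (Kp_ssum Hb); lia.
rewrite /g eqxx; case: eqP => [E|_]; first by move: Ha; rewrite E (Kp_ssum Hb); lia.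
by rewrite subr0 mulr1.
Qed.

Lemma Gok_zero (g : node -> R) (x : node) : Gok gamma t g -> inD x -> ssum x = t.+1 -> g x = 0.
Proof.
move=> [Gs _] Dx Hs; apply: Gs; apply/negP.
- by move/Lt_ssum; rewrite Hs; lia.
- by move/Km_BD; rewrite /inBD Dx.
- by move/Kp_BD; rewrite /inBD Dx.
Qed.

Lemma Et_Km (a b : node) : Et t a b -> Km t a -> Lt t.+1 b.
Proof.
move=> /andP [_ /or3P [/andP [_ ->]|/andP [H _]|/andP [H _]]] // Ha;
  by move: (Km_BD Ha); rewrite /inBD (Lt_D H).
Qed.

Lemma propw (q a a' : node) : Lt t.+1 q -> Et t a q -> Et t a' q ->
  w a q * gamma q a' = w a' q * gamma q a.
Proof.
move=> Hq Ha Ha'; case: (eqVneq a a') => [->//|Naa].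
have [g [Gg Hg]] := stage1 hd hn gamma_pos Hq Ha Ha' Naa.
have := test Gg (p := q); rewrite Hq orbT /= => /(_ isT).
have gq : g q = 0 by apply: Gok_zero Gg (Lt_D Hq) (Lt_ssum Hq).
have Nq : forall x, Et t x q -> (x == q) = false.
  move=> x Hx; apply/eqP => E; have [E1 _] := Et_ssum Hx; move: E1; rewrite E (Lt_ssum Hq); lia.
rewrite (dot_col (q := q)); last first.
  move=> a'' b'' Hab Nb; rewrite /Jvec (negbTE Nb); case: eqP => // E.
  by have [E1 E2] := Et_ssum Hab; move: E1 E2; rewrite E (Lt_ssum Hq); lia.
rewrite (eq_bigr (fun a'' => - (w a'' q * (if a'' == a then gamma q a' else if a'' == a' then - gamma q a else 0)))); last first.
  by move=> x Hx; rewrite /Jvec Nq // eqxx gq Hg // sub0r mulrN.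
rewrite sumrN (bigD1 a) //= (bigD1 a') /=; last by rewrite Ha' eq_sym Naa.
rewrite big1; last first.
  by move=> x /andP [/andP [_ N1] N2]; rewrite (negbTE N1) (negbTE N2) mulr0.
rewrite eqxx (negbTE (introN eqP (fun E => (negP Naa) (introT eqP (esym E))))) eqxx.
by move/eqP; rewrite oppr_eq0 addr0 mulrN subr_eq0 => /eqP.
Qed.

Lemma decr_Et (q : node) i : Lt t.+1 q -> Et t (decr i q) q.
Proof.
move=> Hq; have Dq := Lt_D Hq; apply: star_Et => //; first exact: edge_decr.
have := ssum_decr (i := i) (x := q); rewrite (Lt_ssum Hq).
by case/andP: (inD_coord i Dq) => H _ /(_ H) [].
Qed.

Lemma decr01 (q : node) : inD q -> decr i0 q != decr i1 q.
Proof.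
move=> Dq; apply/eqP => E; have := congr1 (fun f : node => (f i0 : nat)) E.
rewrite /= decr_i decr_j //; case/andP: (inD_coord i0 Dq); clear; case: (nat_of_ord _) => // m _ _.
by move=> /= /eqP; rewrite -[X in _ == X]addn1 -[X in X == _]addn0 eqn_add2l.
Qed.

Lemma other_star (q a : node) : Lt t.+1 q -> exists a', Et t a' q /\ a != a'.
Proof.
move=> Hq; have D01 := decr01 (Lt_D Hq).
case: (eqVneq (decr i0 q) a) => [E|N].
  exists (decr i1 q); split; first exact: decr_Et.
  by rewrite -E.
by exists (decr i0 q); split; [exact: decr_Et | rewrite eq_sym].
Qed.

Lemma stepB (a b : node) : Et t a b -> Km t a -> w a b = 0.
Proof.
move=> Hab Ha; have Hb := Et_Km Hab Ha.
have [a' [Ha' Naa]] := other_star a Hb.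
have [g [Gg Hg]] := stage1 hd hn gamma_pos Hb Hab Ha' Naa.
have := test Gg (p := a); rewrite /Jt Ha !orbT => /(_ isT).
have [Esa _] := Et_ssum Hab.
rewrite (dot_row (p := a)); last first.
  move=> a'' b'' Hab' Na; rewrite /Jvec (negbTE Na); case: eqP => // E.
  by have [_ E2] := Et_ssum Hab'; move: E2; rewrite E Esa; lia.
rewrite (bigD1 b) //= big1 ?addr0; last first.
  move=> b'' /andP [Hb'' Nb]; exfalso; move/negP: Nb; apply; apply/eqP.
  apply: (BD_nbr_unique (Km_BD Ha)) (Lt_D (Et_Km Hb'' Ha)) (Lt_D Hb) _ _.
    by rewrite adj_sym; exact: edge_adj (proj1 (andP Hb'')).
  by rewrite adj_sym; exact: edge_adj (proj1 (andP Hab)).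
rewrite /Jvec eqxx (Hg a Hab) eqxx (Gok_zero Gg (Lt_D Hb) (Lt_ssum Hb)) subr0.
move/eqP; rewrite mulf_eq0 => /orP [/eqP //|].
have [He _] := Et_q Hb Ha'.
by rewrite gt_eqF // gamma_pos // edge_sym.
Qed.

Lemma stepC (p q : node) : Lt t p -> Lt t.+1 q -> Et t p q -> \sum_(b | Et t p b) w p b = 0.
Proof.
move=> Hp Hq Hpq; have [a' [Ha' Naa]] := other_star p Hq.
have [g [Gg Hg]] := stage1 hd hn gamma_pos Hq Hpq Ha' Naa.
have := test Gg (p := p); rewrite Hp /= => /(_ isT).
rewrite (dot_row (p := p)); last first.
  move=> a'' b'' Hab' Na; rewrite /Jvec (negbTE Na); case: eqP => // E.
  by have [_ E2] := Et_ssum Hab'; move: E2; rewrite E (Lt_ssum Hp); lia.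
rewrite (eq_bigr (fun b => w p b * g p)); last first.
  move=> b Hb; rewrite /Jvec eqxx.
  have /andP [_ /orP [Lb|Kb]] := Et_ends Hb.
    by rewrite (Gok_zero Gg (Lt_D Lb) (Lt_ssum Lb)) subr0.
  by rewrite (stepA Hb Kb) !mul0r.
rewrite -mulr_suml (Hg p Hpq) eqxx; move/eqP; rewrite mulf_eq0 => /orP [/eqP //|].
have [He _] := Et_q Hq Ha'.
by rewrite gt_eqF // gamma_pos // edge_sym.
Qed.

Lemma stepD k : forall q : node, Lt t.+1 q -> (q i0 < k)%N -> forall a, Et t a q -> w a q = 0.
Proof.
elim: k => [//|k IH] q Hq Hk a Ha.
have Dq := Lt_D Hq.
have Hp := decr_Et i0 Hq.
suff Hw : w (decr i0 q) q = 0.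
  have := propw Hq Ha Hp; rewrite Hw mul0r => /eqP; rewrite mulf_eq0 => /orP [/eqP //|].
  by rewrite gt_eqF // gamma_pos // edge_decr.
have [He Hpc] := Et_q Hq Hp.
case/orP: Hpc => [Km0|Lp]; first exact: stepB Hp Km0.
have := stepC Lp Hq Hp; rewrite (bigD1 q) //= big1 ?addr0 //.
move=> b /andP [Hb Nb].
have /andP [_ /orP [Lb|Kb]] := Et_ends Hb; last exact: stepA Hb Kb.
have Hq0 : (0 < q i0)%N by case/andP: (inD_coord i0 Dq).
have Ha1 : adj (decr i0 q) b by exact: edge_adj (proj1 (andP Hb)).
case: (decr_up Hq0 Ha1 (etrans (Lt_ssum Lb) (esym (Lt_ssum Hq)))) => [E|[E _]].
  by rewrite E eqxx in Nb.
apply: (IH b Lb) => //.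
by rewrite E; move: Hk Hq0; clear; case: (nat_of_ord _) => //= m; rewrite !ltnS => H _; apply: leq_trans H.
Qed.

Lemma main_w (a b : node) : Et t a b -> w a b = 0.
Proof.
move=> Hab; have /andP [_ /orP [Lb|Kb]] := Et_ends Hab; last exact: stepA Hab Kb.
by apply: (@stepD (b i0).+1 b Lb _ a Hab).
Qed.
End MainProof.

Unset Implicit Arguments. Set Strict Implicit. Set Printing Implicit Defensive.
Local Open Scope ring_scope.

Theorem theorem4p2 (R : realFieldType) (d n : nat) (hd : (2 <= d)%N) (hn : (1 <= n)%N)
  (gamma : node d n -> node d n -> R)
  (gamma_sym : forall p q, gamma p q = gamma q p)
  (gamma_pos : forall p q, edge p q -> 0 < gamma p q)
  (t : nat) (ht1 : (d - 1 <= t)%N) (ht2 : (t <= d * n - 1)%N)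
  (w : node d n -> node d n -> R) :
  (forall u, inU gamma t u ->
     forall p, Lt t p || Lt t.+1 p || Jt t p ->
       dotEt t w (fun a b => Jvec u p a b) = 0) ->
  forall a b, Et t a b -> w a b = 0.
Proof.
move=> H a b Hab; exact: (main_w hd hn gamma_pos H Hab).
Qed.
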